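(* Let $G$ and $H$ be connected graphs of order at least two such that neither $G$ nor $H$ is a complete graph, and suppose $\textnormal{diam}(G\diamond H)=3$. (a) If $\{g,g'\}$ is a $\gamma_G$-pair and $\{h,h'\}$ is a $\gamma_H$-pair, then $O_{\rm SR}(G\diamond H)=\mathcal{B}$. (b) If $G$ has at least two distinct universal vertices and $\textnormal{diam}(H)\ge 3$, then $O_{\rm SR}(G\diamond H)=\mathcal{B}$. (c) Suppose $G$ has no $\gamma_G$-pair and no universal vertex, but $G$ has a pair of distinct adjacent twins and $H$ has a $\gamma_H$-pair. Then $O_{\rm SR}(G\diamond H)=\mathcal{B}$. (d) Suppose $G$ has no $\gamma_G$-pair and no universal vertex, and $H$ has a $\gamma_H$-pair and at least two distinct vertices of $H$ belong to no $\gamma_H$-pair. Then $O_{\rm SR}(G\diamond H)=\mathcal{B}$. (e) Suppose $G$ has no $\gamma_G$-pair and no universal vertex, and $H$ has distinct adjacent twins $h_1,h_2$ such that both $\{h_1,h\}$ and $\{h_2,h\}$ are $\gamma_H$-pairs for some $h\in V(H)\setminus\{h_1,h_2\}$. Then $O_{\rm SR}(G\diamond H)=\mathcal{B}$.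
   Context: All graphs are finite, simple and undirected; $\overline{X}$ denotes the complement of $X$; $\textnormal{diam}$ denotes diameter; $N_X[x]=N_X(x)\cup\{x\}$. A universal vertex of $X$ is a vertex adjacent to all other vertices. Distinct vertices $u,w$ are adjacent twins if $N[u]=N[w]$. A set $D$ is a dominating set of $X$ if $\bigcup_{x\in D}N[x]=V(X)$. A pair $\{u,w\}$ is a $\gamma_X$-pair if $\{u,w\}$ is a minimum dominating set of $X$ with $N_X[u]\cap N_X[w]=\emptyset$ and $N_X[u]\cup N_X[w]=V(X)$. The modular product $G\diamond H$ has vertex set $V(G)\times V(H)$, and $(g,h)$, $(g',h')$ are adjacent iff one of the following holds: ($g=g'$ and $hh'\in E(H)$), or ($h=h'$ and $gg'\in E(G)$), or ($gg'\in E(G)$ and $hh'\in E(H)$), or ($gg'\in E(\overline{G})$ and $hh'\in E(\overline{H})$). A set $S\subseteq V(X)$ is a strong resolving set of a connected graph $X$ if for all distinct $x,y\in V(X)$ there exists $z\in S$ such that $x$ lies on a $y$–$z$ geodesic or $y$ lies on an $x$–$z$ geodesic. The Maker–Breaker strong resolving game on $X$: Maker and Breaker alternately select a not-yet-chosen vertex of $X$; Maker wins if the vertices he selects contain a strong resolving set of $X$, Breaker wins otherwise. In the M-game Maker moves first, in the B-game Breaker moves first. $O_{\rm SR}(X)=\mathcal{M}$ if Maker has a winning strategy in both games, $\mathcal{B}$ if Breaker has a winning strategy in both, and $\mathcal{N}$ if the first player has a winning strategy in each. *)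

(* Defs.v *)
From mathcomp Require Import all_boot.
Set Implicit Arguments. Unset Strict Implicit. Unset Printing Implicit Defensive.

Section Graphs.
Variables (T : finType) (e : rel T).

Definition simple_graph : Prop := symmetric e /\ irreflexive e.

Definition connected_graph : Prop := forall x y : T, connect e x y.

Definition complete_graph : Prop := forall x y : T, x != y -> e x y.

Definition cnbhd (x : T) : {set T} := x |: [set y | e x y].

(* distance: least length of an x-y walk (walks shorter than |V| suffice);
   defaults to #|T| if y is unreachable from x *)
Definition dist (x y : T) : nat :=
  \big[minn/#|T|]_(k < #|T| | [exists p : k.-tuple T, path e x p && (last x p == y)]) (k : nat).

Definition diam : nat := \max_(x : T) \max_(y : T) dist x y.

Definition on_geodesic (a b x : T) : Prop :=
  exists p : seq T, [/\ path e a p, last a p = b, size p = dist a b & x \in a :: p].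

Definition strong_resolving (S : {set T}) : Prop :=
  forall x y : T, x != y ->
    exists2 z, z \in S & (on_geodesic y z x \/ on_geodesic x z y).

Definition universal (u : T) : Prop := forall x : T, x != u -> e u x.

Definition adjacent_twins (u w : T) : Prop := u != w /\ cnbhd u = cnbhd w.

Definition dominating (D : {set T}) : Prop := \bigcup_(x in D) cnbhd x = [set: T].

Definition min_dominating (D : {set T}) : Prop :=
  dominating D /\ forall D' : {set T}, dominating D' -> #|D| <= #|D'|.

Definition gamma_pair (u w : T) : Prop :=
  [/\ min_dominating [set u; w], cnbhd u :&: cnbhd w = set0 &
      cnbhd u :|: cnbhd w = [set: T]].

End Graphs.

Definition modprod (T1 T2 : finType) (e1 : rel T1) (e2 : rel T2) : rel (T1 * T2) :=
  fun p q =>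
    let: (g, h) := p in let: (g', h') := q in
    [|| (g == g') && e2 h h', (h == h') && e1 g g', e1 g g' && e2 h h'
      | [&& g != g', ~~ e1 g g', h != h' & ~~ e2 h h'] ].

(* Maker-Breaker strong resolving game.  Positions: M = Maker's vertices,
   B = Breaker's vertices; the game ends when no vertex is free. *)
Section Game.
Variables (T : finType) (e : rel T).

Definition maker_goal (M : {set T}) : Prop :=
  exists2 S : {set T}, S \subset M & strong_resolving e S.

(* Maker has a winning strategy from (M, B) with [maker_turn] to move;
   n is fuel (number of remaining moves, #|T| suffices). *)
Fixpoint maker_wins (n : nat) (M B : {set T}) (maker_turn : bool) : Prop :=
  match n with
  | 0 => maker_goal M
  | n'.+1 =>
      if ~: (M :|: B) == set0 then maker_goal M else
      if maker_turn then exists2 v, v \in ~: (M :|: B) & maker_wins n' (v |: M) B false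
      else forall v, v \in ~: (M :|: B) -> maker_wins n' M (v |: B) true
  end.

Fixpoint breaker_wins (n : nat) (M B : {set T}) (maker_turn : bool) : Prop :=
  match n with
  | 0 => ~ maker_goal M
  | n'.+1 =>
      if ~: (M :|: B) == set0 then ~ maker_goal M else
      if maker_turn then forall v, v \in ~: (M :|: B) -> breaker_wins n' (v |: M) B false
      else exists2 v, v \in ~: (M :|: B) & breaker_wins n' M (v |: B) true
  end.

(* O_SR(X) = B : Breaker wins both the M-game and the B-game. *)
Definition outcome_SR_B : Prop :=
  breaker_wins #|T| set0 set0 true /\ breaker_wins #|T| set0 set0 false.

End Game.

(* Main.v *)
Require Import Defs.
From mathcomp Require Import all_boot zify.
Set Implicit Arguments. Unset Strict Implicit. Unset Printing Implicit Defensive.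

Section Gen.
Variables (T : finType) (r : rel T).

Definition Nb (u z : T) := (u == z) || r u z.
Definition cn (u v : T) := exists z, Nb u z && Nb v z.
Definition far (u v : T) := ~ cn u v.
Definition okp (u v : T) :=
  far u v \/ [/\ u != v, ~~ r u v, forall w, cn v w & forall w, cn u w].

Lemma NbC (rsym : symmetric r) u z : Nb u z = Nb z u.
Proof. by rewrite /Nb eq_sym rsym. Qed.

Lemma Nbxx u : Nb u u.
Proof. by rewrite /Nb eqxx. Qed.

Lemma cnC u v : cn u v -> cn v u.
Proof. by case=> z h; exists z; rewrite andbC. Qed.

Lemma farC u v : far u v -> far v u.
Proof. by move=> h c; apply: h; apply: cnC. Qed.

Lemma okC (rsym : symmetric r) u v : okp u v -> okp v u.
Proof.
case=> [h|[h1 h2 h3 h4]]; [left; exact: farC|right; split=> //].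
  by rewrite eq_sym.
by rewrite rsym.
Qed.

Lemma ok_neq u v : okp u v -> u != v.
Proof.
case=> [h|[]] //; apply/eqP=> e; apply: h; exists u; by rewrite -e Nbxx.
Qed.

Lemma bigmin_le (I : finType) (P : pred I) (F : I -> nat) x0 j :
  P j -> \big[minn/x0]_(i | P i) F i <= F j.
Proof.
move=> Pj; rewrite -big_filter.
have : j \in [seq i <- index_enum I | P i] by rewrite mem_filter Pj mem_index_enum.
elim: [seq i <- index_enum I | P i] => [|i s IH] //.
rewrite inE big_cons => /orP [/eqP <-|/IH h]; first exact: geq_minl.
by rewrite geq_min h orbT.
Qed.

Lemma dist_le a b p : path r a p -> last a p = b -> dist r a b <= size p.
Proof.
move=> pp lp; rewrite /dist.
case: (ltnP (size p) #|T|) => hs.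
  apply: (@bigmin_le _ _ _ _ (Ordinal hs)) => /=.
  apply/existsP; exists (in_tuple p); by rewrite pp lp eqxx.
apply: leq_trans _ hs; elim/big_ind: _ => // [x y hx hy|k _].
  by rewrite geq_min hx.
exact: ltnW.
Qed.

Lemma dist_ge m a b : m <= #|T| ->
  (forall p, path r a p -> last a p = b -> m <= size p) -> m <= dist r a b.
Proof.
move=> hm H; rewrite /dist; elim/big_ind: _ => //.
  by move=> x y hx hy; rewrite leq_min hx hy.
move=> k /existsP [t /andP [pt /eqP lt]].
by have := H _ pt lt; rewrite size_tuple.
Qed.

Lemma last_take (a : T) p i : i <= size p -> last a (take i p) = nth a (a :: p) i.
Proof.
elim: p a i => [|x p IH] a [|i] //= hi.
rewrite IH //; apply: set_nth_default; by rewrite /= ltnS.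
Qed.

Lemma geo_lt a b x : on_geodesic r a b x -> x != b -> dist r a x < dist r a b.
Proof.
case=> p [pp lp sp xin] xb.
have hi : index x (a :: p) < (size p).+1 by rewrite -[(size p).+1]/(size (a::p)) index_mem.
have hx : nth a (a::p) (index x (a :: p)) = x by exact: nth_index.
have hne : index x (a :: p) != size p.
  apply/eqP=> ei; move: hx; rewrite ei -last_nth lp => e.
  by rewrite e eqxx in xb.
have hlt : index x (a :: p) < size p by rewrite ltn_neqAle hne -ltnS.
rewrite -sp; apply: leq_ltn_trans (hlt).
have := dist_le (take_path (index x (a :: p)) pp) (erefl _).
rewrite last_take ?hx; last exact: ltnW hlt.
by rewrite size_take hlt.
Qed.

Lemma dist_le_diam a b : dist r a b <= diam r.
Proof.
rewrite /diam; apply: leq_trans (leq_bigmax a).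
exact: (leq_bigmax (F := fun y => dist r a y) b).
Qed.

Hypothesis rsym : symmetric r.

Lemma far_dist u v : 3 <= #|T| -> far u v -> 3 <= dist r u v.
Proof.
move=> hc hf; apply: dist_ge => // p.
case: p => [|w1 [|w2 [|w3 p]]] //=.
- move=> _ e; case: hf; exists u; by rewrite -e Nbxx.
- move=> /andP [h _] e; case: hf; exists v; by rewrite Nbxx /Nb -e h orbT.
- move=> /andP [h1 /andP [h2 _]] e; case: hf; exists w1.
  by rewrite /Nb h1 -e rsym h2 !orbT.
Qed.

Lemma ne_dist2 u v : 2 <= #|T| -> u != v -> ~~ r u v -> 2 <= dist r u v.
Proof.
move=> hc hne hr; apply: dist_ge => // p.
case: p => [|w1 [|w2 p]] //=.
- by move=> _ e; rewrite e eqxx in hne.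
- by move=> /andP [h _] e; rewrite -e h in hr.
Qed.

Lemma cn_dist u v : cn u v -> dist r u v <= 2.
Proof.
case=> z /andP [].
rewrite /Nb; case/orP=> [/eqP <-|h1]; case/orP=> [/eqP e|h2].
- by apply: leq_trans (dist_le (p := [::]) _ _) _.
- by apply: leq_trans (dist_le (p := [:: v]) _ _) _ => //=; rewrite rsym h2.
- by apply: leq_trans (dist_le (p := [:: z]) _ _) _ => //=; rewrite h1.
- by apply: leq_trans (dist_le (p := [:: z; v]) _ _) _ => //=; rewrite h1 rsym h2.
Qed.

Hypothesis hdiam : diam r <= 3.
Hypothesis hcard : 4 <= #|T|.

Lemma ok_in (u v : T) (S : {set T}) : okp u v -> strong_resolving r S ->
  (u \in S) || (v \in S).
Proof.
move=> hok hS; apply/negPn/negP; rewrite negb_or => /andP [uS vS].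
have huv := ok_neq hok.
have [z zS hz] := hS u v huv.
have zu : z != u by apply: contraNneq uS => <-.
have zv : z != v by apply: contraNneq vS => <-.
have c3 : 3 <= #|T| by apply: leq_trans hcard.
have c2 : 2 <= #|T| by apply: leq_trans hcard.
have dz a : dist r a z <= 3 := leq_trans (dist_le_diam a z) hdiam.
case: hz => hg.
- have := geo_lt hg; rewrite eq_sym zu => /(_ isT) lt.
  case: hok => [hf|[_ hr hcv _]].
  + have := far_dist c3 (farC hf); have := dz v; lia.
  + have := @ne_dist2 v u c2; rewrite eq_sym huv rsym hr => /(_ isT isT).
    have := cn_dist (hcv z); lia.
- have := geo_lt hg; rewrite eq_sym zv => /(_ isT) lt.
  case: hok => [hf|[_ hr _ hcu]].
  + have := far_dist c3 hf; have := dz u; lia.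
  + have := @ne_dist2 u v c2; rewrite huv hr => /(_ isT isT).
    have := cn_dist (hcu z); lia.
Qed.

Lemma compl_ne (M B : {set T}) v : v \in ~: (M :|: B) -> (~: (M :|: B) == set0) = false.
Proof. by move=> h; apply/eqP => e; rewrite e in_set0 in h. Qed.

Lemma terminal n x y : okp x y -> forall (M B : {set T}) t, x \in B -> y \in B -> x \notin M -> y \notin M ->
  breaker_wins r n M B t.
Proof.
move=> hok; elim: n => [|n IH] M B t xB yB xM yM.
  move=> /= [S sub hS]; have := ok_in hok hS.
  by case/orP => /(subsetP sub) h; [rewrite h in xM | rewrite h in yM].
rewrite /=; case: ifP => hc.
  move=> [S sub hS]; have := ok_in hok hS.
  by case/orP => /(subsetP sub) h; [rewrite h in xM | rewrite h in yM].
case: t.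
  move=> v; rewrite !inE negb_or => /andP [vM vB].
  apply: IH => //; rewrite !inE negb_or ?xM ?yM ?andbT.
    by apply: contraNneq vB => <-.
  by apply: contraNneq vB => <-.
have /set0Pn [v vin] : ~: (M :|: B) != set0 by rewrite hc.
exists v => //; apply: IH => //; rewrite !inE ?xB ?yB orbT //.
Qed.

Lemma bw_maker n M B : ~: (M :|: B) != set0 ->
  (forall v, v \in ~: (M :|: B) -> breaker_wins r n (v |: M) B false) ->
  breaker_wins r n.+1 M B true.
Proof. by move=> ne H /=; rewrite (negbTE ne). Qed.

Lemma bw_breaker n M B v : v \in ~: (M :|: B) ->
  breaker_wins r n M (v |: B) true -> breaker_wins r n.+1 M B false.
Proof. by move=> vin H /=; rewrite (compl_ne vin); exists v. Qed.

Definition star_cond := forall v : T, exists c l1 l2,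
  [/\ c != v, l1 != v, l2 != v, l1 != l2 & okp c l1 /\ okp c l2].

Lemma game : star_cond -> outcome_SR_B r.
Proof.
move=> hs.
have [n hn] : exists n, #|T| = n.+4 by exists (#|T| - 4); lia.
have /card_gt0P [a0 _] : 0 < #|T| by lia.
rewrite /outcome_SR_B hn; split.
- apply: bw_maker; first by apply/set0Pn; exists a0; rewrite !inE.
  move=> v _.
  have [c [l1 [l2 [cv l1v l2v l12 [o1 o2]]]]] := hs v.
  have cl1 := ok_neq o1; have cl2 := ok_neq o2.
  apply: (@bw_breaker _ _ _ c); first by rewrite !inE !orbF.
  apply: bw_maker.
    apply/set0Pn; exists l1; rewrite !inE !orbF negb_or l1v.
    by rewrite eq_sym cl1.
  move=> w; rewrite !inE !orbF !negb_or => /andP [wv wc].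
  pose l := if l1 == w then l2 else l1.
  have ol : okp c l by rewrite /l; case: ifP.
  have lw : l != w.
    rewrite /l; case: ifP => [/eqP e|/negbT //]; by rewrite -e eq_sym.
  have lv : l != v by rewrite /l; case: ifP.
  have lc : l != c by rewrite eq_sym (ok_neq ol).
  apply: (@bw_breaker _ _ _ l); first by rewrite !inE !orbF !negb_or lw lv lc.
  apply: (@terminal _ _ _ ol); rewrite !inE ?orbF ?eqxx ?orbT //= ?negb_or ?cv ?lw ?lv //.
  by rewrite eq_sym wc.
- have [c [l1 [l2 [cv l1v l2v l12 [o1 o2]]]]] := hs a0.
  have cl1 := ok_neq o1; have cl2 := ok_neq o2.
  apply: (@bw_breaker _ _ _ c); first by rewrite !inE.
  apply: bw_maker.
    apply/set0Pn; exists l1; rewrite !inE /= ?orbF.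
    by rewrite eq_sym cl1.
  move=> w win; have wc : w != c by move: win; rewrite !inE /= ?orbF.
  pose l := if l1 == w then l2 else l1.
  have ol : okp c l by rewrite /l; case: ifP.
  have lw : l != w.
    rewrite /l; case: ifP => [/eqP e|/negbT //]; by rewrite -e eq_sym.
  have lc : l != c by rewrite eq_sym (ok_neq ol).
  apply: (@bw_breaker _ _ _ l); first by rewrite !inE /= ?orbF negb_or lw lc.
  apply: (@terminal _ _ _ ol); rewrite !inE ?eqxx /= ?orbT ?orbF //.
  by rewrite eq_sym.
Qed.

Lemma c4_star a b c d : okp a b -> okp b c -> okp c d -> okp d a ->
  a != c -> b != d -> star_cond.
Proof.
move=> hab hbc hcd hda ac bd v.
have nab := ok_neq hab; have nbc := ok_neq hbc.
have ncd := ok_neq hcd; have nda := ok_neq hda.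
case: (eqVneq v a) => [->|va].
  exists c, b, d; split; try (by []); try (by rewrite eq_sym); split=> //; exact: okC.
case: (eqVneq v b) => [->|vb].
  exists d, a, c; split; try (by []); try (by rewrite eq_sym); split=> //; exact: okC.
case: (eqVneq v d) => [->|vd].
  exists b, a, c; split; try (by []); try (by rewrite eq_sym); split=> //; exact: okC.
exists a, b, d; split; try (by []); try (by rewrite eq_sym); split=> //; exact: okC.
Qed.

End Gen.

Section Graph.
Variables (T : finType) (e : rel T).

Lemma in_cnbhd u y : (y \in cnbhd e u) = Nb e u y.
Proof. by rewrite /cnbhd !inE eq_sym. Qed.

Lemma gammaNb u w : gamma_pair e u w -> forall y, Nb e w y = ~~ Nb e u y.
Proof.
case=> _ hcap hcup y.
have h1 : y \in cnbhd e u :&: cnbhd e w = false by rewrite hcap in_set0.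
have h2 : y \in cnbhd e u :|: cnbhd e w by rewrite hcup in_setT.
move: h1 h2; rewrite inE in_setU !in_cnbhd.
by case: (Nb e u y); case: (Nb e w y).
Qed.

Lemma gamma_neq u w : gamma_pair e u w -> u != w.
Proof.
move=> /gammaNb h; apply/eqP => E; have := h w; by rewrite -E Nbxx.
Qed.

Lemma univNb u : universal e u -> forall x, Nb e u x.
Proof.
move=> hu x; rewrite /Nb; case: (eqVneq u x) => [//|ux] /=.
by apply: hu; rewrite eq_sym.
Qed.

Lemma twinsNb u w : adjacent_twins e u w -> forall x, Nb e w x = Nb e u x.
Proof. by case=> _ E x; rewrite -!in_cnbhd E. Qed.

Lemma no_univ_of_gamma : symmetric e -> forall h h', gamma_pair e h h' ->
  forall u, ~ universal e u.
Proof.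
move=> sym h h' /gammaNb hg u /univNb hu.
have := hg u; rewrite (NbC sym h' u) (NbC sym h u) !hu //.
Qed.

Lemma nonuniv_ex u : ~ universal e u -> exists X, ~~ Nb e u X.
Proof.
move=> hu; case: (pickP (fun X => ~~ Nb e u X)) => [X h|none]; first by exists X.
case: hu => x xu; have := none x; rewrite /Nb /= eq_sym (negbTE xu) /=.
by move/negbFE.
Qed.

Lemma diag_ex a c : (exists x0 : T, true) -> (forall u, ~ universal e u) ->
  ~ gamma_pair e a c -> exists X, Nb e a X = Nb e c X.
Proof.
move=> [x0 _] hU hg.
case: (pickP (fun X => Nb e a X == Nb e c X)) => [X /eqP h|none]; first by exists X.
case: hg; have hd y : Nb e c y = ~~ Nb e a y.
  by have := none y; case: (Nb e a y); case: (Nb e c y).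
split.
- split.
    apply/setP => y; rewrite in_setT; apply/bigcupP.
    case ha: (Nb e a y).
      by exists a; rewrite ?in_cnbhd // !inE eqxx.
    by exists c; rewrite ?in_cnbhd ?hd ?ha // !inE eqxx orbT.
  move=> D hD; rewrite cards2; apply: leq_trans (_ : 2 <= #|D|); first by case: (a != c).
  rewrite leqNgt; apply/negP => hlt.
  have hle : #|D| <= 1 by [].
  have [u uD hu] : exists2 u, u \in D & a \in cnbhd e u.
    have : a \in \bigcup_(x in D) cnbhd e x by rewrite hD in_setT.
    by case/bigcupP => u uD hu; exists u.
  apply: (hU u) => x xu.
  have : x \in \bigcup_(x in D) cnbhd e x by rewrite hD in_setT.
  case/bigcupP => u' u'D hu'.
  have E := card_le1_eqP hle u' u u'D uD.
  move: hu'; rewrite in_cnbhd -E /Nb (eq_sym u x) (negbTE xu) /=.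
  done.
- apply/setP => y; rewrite in_set0 inE !in_cnbhd hd.
  by case: (Nb e a y).
- apply/setP => y; rewrite in_setT in_setU !in_cnbhd hd.
  by case: (Nb e a y).
Qed.

Lemma adj_ex : connected_graph e -> 1 < #|T| -> exists g g', e g g'.
Proof.
move=> hc /card_gt1P [x [y [_ _ xy]]].
have /connectP [p pp ly] := hc x y.
case: p pp ly => [|w p] /=; first by move=> _ E; rewrite E eqxx in xy.
by case/andP => h _ _; exists x, w.
Qed.

Lemma nonadj_ex : ~ complete_graph e -> exists g g', g != g' /\ ~~ e g g'.
Proof.
move=> hc.
case: (pickP (fun p : T * T => (p.1 != p.2) && ~~ e p.1 p.2)) => [[g g'] /andP [h1 h2]|none].
  by exists g, g'.
case: hc => x y xy; have := none (x, y); rewrite /= xy /=.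
by move/negbFE.
Qed.

End Graph.

Section Prod.
Variables (T1 T2 : finType) (e1 : rel T1) (e2 : rel T2).
Hypothesis s1 : simple_graph e1.
Hypothesis s2 : simple_graph e2.
Local Notation P := (modprod e1 e2).

Lemma NbP a b x y : Nb P (a, b) (x, y) = (Nb e1 a x == Nb e2 b y).
Proof.
case: s1 => sym1 irr1; case: s2 => sym2 irr2.
rewrite /Nb /modprod /= xpair_eqE.
case: (eqVneq a x) => [<-|ax]; case: (eqVneq b y) => [<-|bY];
  rewrite ?irr1 ?irr2 /=; by case: (e1 a x); case: (e2 b y).
Qed.

Lemma P_sym : symmetric P.
Proof.
case: s1 => sym1 _; case: s2 => sym2 _.
move=> [a b] [x y]; by rewrite /modprod /= (sym1 a x) (sym2 b y) (eq_sym a x) (eq_sym b y).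
Qed.

Lemma farP a b c d :
  (forall x y, (Nb e1 a x == Nb e2 b y) -> (Nb e1 c x == Nb e2 d y) -> False) ->
  far P (a, b) (c, d).
Proof. move=> H [[x y]]; rewrite !NbP => /andP [h1 h2]; exact: H h1 h2. Qed.

Lemma cnP a b c d :
  (exists x y, (Nb e1 a x == Nb e2 b y) && (Nb e1 c x == Nb e2 d y)) ->
  cn P (a, b) (c, d).
Proof. by case=> x [y h]; exists (x, y); rewrite !NbP. Qed.

Lemma okP2 a b c d : Nb e1 a c != Nb e2 b d ->
  (forall w, cn P (a, b) w) -> (forall w, cn P (c, d) w) -> okp P (a, b) (c, d).
Proof.
move=> hn h1 h2; right; split => //.
  apply/eqP => [[E1 E2]]; move: hn; by rewrite E1 E2 !Nbxx.
move: hn; rewrite -NbP /Nb negb_or; by case/andP.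
Qed.

Lemma cn_free c d :
  (forall a a', exists X, Nb e1 a X = Nb e1 a' X) ->
  (forall a, exists X, ~~ Nb e1 a X) ->
  (forall b, exists Y, Nb e2 b Y = Nb e2 d Y) ->
  (forall b, exists Y, ~~ Nb e2 b Y) ->
  forall w, cn P (c, d) w.
Proof.
move=> hG uG hH uH [w1 w2]; apply: cnP.
have [X0 hX0] := hG w1 c; have [Y0 hY0] := hH w2.
case hA: (Nb e1 c X0); case hB: (Nb e2 d Y0).
- by exists X0, Y0; rewrite hX0 hY0 hA hB.
- case: (pickP (fun Y => Nb e2 w2 Y && Nb e2 d Y)) => [Y1 /andP [h1 h2]|none].
    by exists X0, Y1; rewrite hX0 hA h1 h2.
  have [X1 hX1] := uG w1.
  have hw2d : Nb e2 w2 d = false by have := none d; rewrite Nbxx andbT.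
  case hg: (Nb e1 c X1).
    by exists X1, d; rewrite hg Nbxx hw2d (negbTE hX1).
  by exists X1, Y0; rewrite hg hB (negbTE hX1) hY0 hB.
- case: (pickP (fun X => Nb e1 w1 X && Nb e1 c X)) => [X1 /andP [h1 h2]|none].
    by exists X1, Y0; rewrite hY0 hB h1 h2.
  have [Y1 hY1] := uH w2.
  have hw1c : Nb e1 w1 c = false by have := none c; rewrite Nbxx andbT.
  case hg: (Nb e2 d Y1).
    by exists c, Y1; rewrite hg Nbxx hw1c (negbTE hY1).
  by exists X0, Y1; rewrite hg hA (negbTE hY1) hX0 hA.
- by exists X0, Y0; rewrite hX0 hY0 hA hB.
Qed.

End Prod.

Unset Implicit Arguments.

Theorem mainTheorem18 (T1 T2 : finType) (e1 : rel T1) (e2 : rel T2) :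
  simple_graph e1 -> simple_graph e2 ->
  connected_graph e1 -> connected_graph e2 ->
  1 < #|T1| -> 1 < #|T2| ->
  ~ complete_graph e1 -> ~ complete_graph e2 ->
  diam (modprod e1 e2) = 3 ->
  (* (a) *)
  ((exists g g' : T1, gamma_pair e1 g g') ->
   (exists h h' : T2, gamma_pair e2 h h') ->
   outcome_SR_B (modprod e1 e2)) /\
  (* (b) *)
  ((exists u1 u2 : T1, [/\ u1 != u2, universal e1 u1 & universal e1 u2]) ->
   3 <= diam e2 ->
   outcome_SR_B (modprod e1 e2)) /\
  (* (c) *)
  ((forall g g' : T1, ~ gamma_pair e1 g g') ->
   (forall u : T1, ~ universal e1 u) ->
   (exists g1 g2 : T1, adjacent_twins e1 g1 g2) ->
   (exists h h' : T2, gamma_pair e2 h h') ->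
   outcome_SR_B (modprod e1 e2)) /\
  (* (d) *)
  ((forall g g' : T1, ~ gamma_pair e1 g g') ->
   (forall u : T1, ~ universal e1 u) ->
   (exists h h' : T2, gamma_pair e2 h h') ->
   (exists x y : T2, [/\ x != y,
      forall z, ~ gamma_pair e2 x z /\ ~ gamma_pair e2 z x &
      forall z, ~ gamma_pair e2 y z /\ ~ gamma_pair e2 z y]) ->
   outcome_SR_B (modprod e1 e2)) /\
  (* (e) *)
  ((forall g g' : T1, ~ gamma_pair e1 g g') ->
   (forall u : T1, ~ universal e1 u) ->
   (exists h1 h2 h : T2, [/\ adjacent_twins e2 h1 h2, h != h1, h != h2,
      gamma_pair e2 h1 h & gamma_pair e2 h2 h]) ->
   outcome_SR_B (modprod e1 e2)).
Proof.
move=> s1 s2 c1 c2 n1 n2 nc1 nc2 hd.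
have sym1 : symmetric e1 by case: s1.
have sym2 : symmetric e2 by case: s2.
have PS := P_sym s1 s2.
have hcard : 4 <= #|{: T1 * T2}| by rewrite card_prod; nia.
have hdm : diam (modprod e1 e2) <= 3 by rewrite hd.
have G := game PS hdm hcard.
have C4 := c4_star PS.
have pne (a c : T1) (b d : T2) : (a != c) || (b != d) -> (a, b) != (c, d).
  by rewrite xpair_eqE negb_and.
split; [|split; [|split; [|split]]].
-
  move=> [g [g' gG]] [h [h' gH]]; apply: G.
  have hg := gammaNb gG; have hh := gammaNb gH.
  apply: (C4 (g, h) (g, h') (g', h') (g', h)).
  + left; apply: farP => // x y; rewrite ?hg ?hh.
    by case: (Nb e1 g x); case: (Nb e2 h y).
  + left; apply: farP => // x y; rewrite ?hg ?hh.
    by case: (Nb e1 g x); case: (Nb e2 h y).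
  + left; apply: farP => // x y; rewrite ?hg ?hh.
    by case: (Nb e1 g x); case: (Nb e2 h y).
  + left; apply: farP => // x y; rewrite ?hg ?hh.
    by case: (Nb e1 g x); case: (Nb e2 h y).
  + by apply: pne; rewrite (gamma_neq gG).
  + by apply: pne; rewrite (gamma_neq gG).
-
  move=> [u1 [u2 [u12 U1 U2]]] hd2; apply: G.
  have [h [h' disj]] : exists h h' : T2, forall y, ~~ (Nb e2 h y && Nb e2 h' y).
    case: (pickP (fun p : T2 * T2 => 2 < dist e2 p.1 p.2)) => [[h h'] /= hp|none].
      exists h, h' => y; apply/negP => hy.
      have := cn_dist sym2 (ex_intro _ y hy : cn e2 h h'); lia.
    have : diam e2 <= 2.
      apply/bigmax_leqP => x _; apply/bigmax_leqP => y _.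
      by have := none (x, y); rewrite /= ltnNge => /negbFE.
    lia.
  have F (a c : T1) (b d : T2) : universal e1 a -> universal e1 c ->
      (b == h) && (d == h') || (b == h') && (d == h) -> okp (modprod e1 e2) (a, b) (c, d).
    move=> Ua Uc hbd; left; apply: farP => // x y.
    rewrite (univNb Ua) (univNb Uc); have := disj y.
    by case/orP: hbd => /andP [/eqP -> /eqP ->]; case: (Nb e2 h y); case: (Nb e2 h' y).
  apply: (C4 (u1, h) (u1, h') (u2, h) (u2, h')).
  + by apply: F; rewrite ?eqxx.
  + by apply: F; rewrite ?eqxx ?orbT.
  + by apply: F; rewrite ?eqxx.
  + by apply: F; rewrite ?eqxx ?orbT.
  + by apply: pne; rewrite u12.
  + by apply: pne; rewrite u12.
-
  move=> _ _ [g1 [g2 tw]] [h [h' gH]]; apply: G.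
  have ht := twinsNb tw; have hh := gammaNb gH.
  apply: (C4 (g1, h) (g1, h') (g2, h) (g2, h')).
  + left; apply: farP => // x y; rewrite ?ht ?hh.
    by case: (Nb e1 g1 x); case: (Nb e2 h y).
  + left; apply: farP => // x y; rewrite ?ht ?hh.
    by case: (Nb e1 g1 x); case: (Nb e2 h y).
  + left; apply: farP => // x y; rewrite ?ht ?hh.
    by case: (Nb e1 g1 x); case: (Nb e2 h y).
  + left; apply: farP => // x y; rewrite ?ht ?hh.
    by case: (Nb e1 g1 x); case: (Nb e2 h y).
  + by apply: pne; case: tw => ->.
  + by apply: pne; case: tw => ->.
-
  move=> hG hU [h [h' gH]] [x [y [xy fx fy]]]; apply: G.
  have ne1 : exists x0 : T1, true by case/card_gt1P: n1 => a [b _]; exists a.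
  have ne2 : exists x0 : T2, true by case/card_gt1P: n2 => a [b _]; exists a.
  have dG a a' : exists X, Nb e1 a X = Nb e1 a' X := diag_ex ne1 hU (hG a a').
  have uG a : exists X, ~~ Nb e1 a X := nonuniv_ex (hU a).
  have hUH := no_univ_of_gamma sym2 gH.
  have uH b : exists Y, ~~ Nb e2 b Y := nonuniv_ex (hUH b).
  have dx b : exists Y, Nb e2 b Y = Nb e2 x Y := diag_ex ne2 hUH (proj2 (fx b)).
  have dy b : exists Y, Nb e2 b Y = Nb e2 y Y := diag_ex ne2 hUH (proj2 (fy b)).
  have cx c := cn_free s1 s2 c dG uG dx uH.
  have cy c := cn_free s1 s2 c dG uG dy uH.
  case exy: (e2 x y).
  + have [g [g' [gg' ngg']]] := nonadj_ex nc1.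
    have N1 : Nb e1 g g' = false by rewrite /Nb (negbTE gg') (negbTE ngg').
    have N1' : Nb e1 g' g = false by rewrite NbC.
    have N2 : Nb e2 x y by rewrite /Nb exy orbT.
    have N2' : Nb e2 y x by rewrite NbC.
    apply: (C4 (g, x) (g', x) (g, y) (g', y)).
    * by apply: okP2; rewrite ?N1 ?N1' ?N2 ?N2' ?Nbxx.
    * by apply: okP2; rewrite ?N1 ?N1' ?N2 ?N2' ?Nbxx.
    * by apply: okP2; rewrite ?N1 ?N1' ?N2 ?N2' ?Nbxx.
    * by apply: okP2; rewrite ?N1 ?N1' ?N2 ?N2' ?Nbxx.
    * by apply: pne; rewrite xy orbT.
    * by apply: pne; rewrite xy orbT.
  + have [g [g' gg']] := adj_ex c1 n1.
    have ng : g != g' by apply: contraTneq gg' => ->; case: s1 => _ ->.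
    have N1 : Nb e1 g g' by rewrite /Nb gg' orbT.
    have N1' : Nb e1 g' g by rewrite NbC.
    have N2 : Nb e2 x y = false by rewrite /Nb (negbTE xy) exy.
    have N2' : Nb e2 y x = false by rewrite NbC.
    apply: (C4 (g, x) (g, y) (g', x) (g', y)).
    * by apply: okP2; rewrite ?N1 ?N1' ?N2 ?N2' ?Nbxx.
    * by apply: okP2; rewrite ?N1 ?N1' ?N2 ?N2' ?Nbxx.
    * by apply: okP2; rewrite ?N1 ?N1' ?N2 ?N2' ?Nbxx.
    * by apply: okP2; rewrite ?N1 ?N1' ?N2 ?N2' ?Nbxx.
    * by apply: pne; rewrite ng.
    * by apply: pne; rewrite ng.
-
  move=> _ _ [h1 [h2 [h [tw _ _ g1 g2]]]]; apply: G.
  have k1 := gammaNb g1; have k2 := gammaNb g2.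
  have [ga [gb [_ _ gab]]] := card_gt1P n1.
  move=> [v1 v2].
  pose g0 := if ga == v1 then gb else ga.
  have g0v : g0 != v1 by rewrite /g0; case: ifP => [/eqP <-|/negbT //]; rewrite eq_sym.
  exists (g0, h), (g0, h1), (g0, h2); split.
  + by apply: pne; rewrite g0v.
  + by apply: pne; rewrite g0v.
  + by apply: pne; rewrite g0v.
  + by apply: pne; case: tw => ->; rewrite orbT.
  + split.
    * left; apply: farP => // x y; rewrite ?k1.
      by case: (Nb e1 g0 x); case: (Nb e2 h1 y).
    * left; apply: farP => // x y; rewrite ?k2.
      by case: (Nb e1 g0 x); case: (Nb e2 h2 y).
Qed.
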